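(* Let $0<x\le 1$ and $y\ge1$. Then for every $0<a<1$, $$\Gamma(x,y)\ \ge\ \frac{a}{1+a(y-1)}\Big(\frac{a}{e}\Big)^{x-1}\Big(\frac{1-x}{1-a}\Big)^{x-1}.$$ In particular, for all $0<x\le1$ and all $0<a<1$, $$\Gamma(x)\ \ge\ a^{x}e^{1-x}\Big(\frac{1-x}{1-a}\Big)^{x-1}.$$ (When $x=1$ the factor $\big(\frac{1-x}{1-a}\big)^{x-1}$ is interpreted as $0^0=1$.)
   Context: For $x>0,y>0$ the Bigamma function is the (convergent) improper integral $\Gamma(x,y):=\int_0^1(-\ln t)^{x-1}\big(-\ln(1-t)\big)^{y-1}\,dt$. $\Gamma(x)$ denotes Euler's gamma function; note $\Gamma(x,1)=\Gamma(x)$. *)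

(* Defs.v *)
From HB Require Import structures.
From mathcomp Require Import all_boot all_order all_algebra.
From mathcomp Require Import all_classical all_reals all_analysis.
Set Implicit Arguments. Unset Strict Implicit. Unset Printing Implicit Defensive.
Import Order.TTheory GRing.Theory Num.Theory.
Local Open Scope classical_set_scope.
Local Open Scope ring_scope.

Definition Bigamma (R : realType) (x y : R) : \bar R :=
  (\int[@lebesgue_measure R]_(t in `]0%R, 1%R[)
     ((- ln t) `^ (x - 1) * (- ln (1 - t)) `^ (y - 1))%:E)%E.

Definition EulerGamma (R : realType) (x : R) : \bar R :=
  (\int[@lebesgue_measure R]_(t in `]0%R, +oo[) (t `^ (x - 1) * expR (- t))%:E)%E.

(* Main.v *)
Require Import Defs.
From HB Require Import structures.
From mathcomp Require Import ring lra.
From mathcomp Require Import all_boot all_order all_algebra.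
From mathcomp Require Import all_classical all_reals all_analysis measurable_realfun.
Import Order.TTheory GRing.Theory Num.Theory.
Import numFieldNormedType.Exports.
Local Open Scope ring_scope.

Section S.
Context {R : realType}.

Lemma powR_pos (b r : R) : 0 < b -> b `^ r = expR (r * ln b).
Proof. by move=> b0; rewrite /powR gt_eqF. Qed.

Lemma ln_le_sub1 (w : R) : 0 < w -> ln w <= w - 1.
Proof.
move=> w0; have := expR_ge1Dx (ln w); rewrite lnK ?posrE//; lra.
Qed.

Lemma core (x a u : R) : 0 < x < 1 -> 0 < a < 1 -> 0 < u ->
  (x - 1) * (ln a - 1 + ln (1 - x) - ln (1 - a)) - (1 - a) / a * u
   <= (x - 1) * ln u.
Proof.
move=> /andP[x0 x1] /andP[a0 a1] u0.
set c := (1 - a) / (a * (1 - x)).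
have c0 : 0 < c by rewrite /c divr_gt0 ?mulr_gt0 ?subr_gt0.
have hL := @ln_le_sub1 (c * u) (mulr_gt0 c0 u0).
rewrite lnM ?posrE// in hL.
have lc : ln c = ln (1 - a) - ln a - ln (1 - x).
  by rewrite /c ln_div ?posrE ?mulr_gt0 ?subr_gt0// lnM ?posrE ?subr_gt0// opprD addrA.
rewrite lc in hL.
have hc : (x - 1) * c = - ((1 - a) / a).
  rewrite /c; field; rewrite ?subr_eq0; apply/andP; split; apply/eqP; lra.
have key : (x - 1) * (c * u - 1) <= (x - 1) * (ln (1 - a) - ln a - ln (1 - x) + ln u).
  by rewrite ler_wnM2l// ?subr_le0 ?ltW.
move: key; rewrite mulrBr mulrA hc.
nra.
Qed.

Lemma Kexp (x a : R) : 0 < x <= 1 -> 0 < a < 1 ->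
  (a / expR 1) `^ (x - 1) * ((1 - x) / (1 - a)) `^ (x - 1)
  = expR ((x - 1) * (ln a - 1 + ln (1 - x) - ln (1 - a))).
Proof.
move=> /andP[x0]; rewrite le_eqVlt => /predU1P[->|x1] /andP[a0 a1].
  by rewrite subrr !powRr0 mul0r expR0 mulr1.
rewrite !powR_pos ?divr_gt0 ?subr_gt0 ?expR_gt0// -expRD.
congr expR.
rewrite ln_div ?posrE ?expR_gt0// expRK ln_div ?posrE ?subr_gt0//.
ring.
Qed.

Lemma pt1 (x y a t : R) : 0 < x <= 1 -> 1 <= y -> 0 < a < 1 -> 0 < t < 1 ->
  (a / expR 1) `^ (x - 1) * ((1 - x) / (1 - a)) `^ (x - 1)
    * t `^ ((1 - a) / a + (y - 1))
  <= (- ln t) `^ (x - 1) * (- ln (1 - t)) `^ (y - 1).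
Proof.
move=> hx y1 ha /andP[t0 t1].
have [x0 x1'] := andP hx; have [a0 a1] := andP ha.
have q0 : 0 <= (1 - a) / a by rewrite divr_ge0// ?subr_ge0 ltW.
rewrite (@powRD _ t); last by apply/implyP => _; rewrite gt_eqF.
rewrite mulrA; apply: ler_pM.
- by apply: mulr_ge0; [apply: mulr_ge0|]; exact: powR_ge0.
- exact: powR_ge0.
- rewrite Kexp//.
  move: x1'; rewrite le_eqVlt => /predU1P[x1|x1].
    rewrite x1 subrr mul0r expR0 powRr0 mul1r -[leRHS](powRr0 t).
    by apply: ger_powR => //; rewrite t0 ltW.
  have lt0 : 0 < - ln t by rewrite oppr_gt0 ln_lt0// t0.
  rewrite !powR_pos// -expRD ler_expR.
  have := @core x a (- ln t) (introT andP (conj x0 x1)) ha lt0.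
  lra.
- have l0 : 0 < - ln (1 - t) by rewrite oppr_gt0 ln_lt0// subr_gt0 t1 ltrBlDr ltrDl.
  apply: ge0_ler_powR; rewrite ?subr_ge0// ?nnegrE; [exact: ltW|exact: ltW|].
  have := @ln_le_sub1 (1 - t); rewrite subr_gt0 => /(_ t1); lra.
Qed.

Notation mu := (@lebesgue_measure R).

Lemma derivable_pow (p t : R) : 0 < t -> derivable (fun u : R => u `^ p) t 1.
Proof. by move=> t0; apply: (@derivable_powR R 1 p t); rewrite in_itv/= andbT. Qed.

Lemma cont_pow (p t : R) : 0 < t -> {for t, continuous (fun u : R => u `^ p)}.
Proof.
by move=> t0; apply/differentiable_continuous/derivable1_diffP/derivable_pow.
Qed.

Lemma FTC_pow (s e : R) : 0 < s -> 0 < e < 1 ->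
  (\int[mu]_(t in `[e, 1%R]%classic) (t `^ (s - 1))%:E = ((1 - e `^ s) / s)%:E)%E.
Proof.
move=> s0 /andP[e0 e1].
pose F := fun t : R => s^-1 * t `^ s.
have FC : forall t, 0 < t -> {for t, continuous F}.
  move=> t t0; apply: continuousM; first exact: cst_continuous.
  exact: cont_pow.
rewrite (_ : (1 - e `^ s) / s = F 1 - F e); last by rewrite /F powR1; field; rewrite gt_eqF.
apply: continuous_FTC2 => //.
- apply: derivable_within_continuous => t; rewrite in_itv/= => /andP[et _].
  apply: derivable_pow; exact: lt_le_trans et.
- split.
  + move=> t; rewrite in_itv/= => /andP[et _]; apply: derivableM => //.
    apply: derivable_pow; exact: lt_trans et.
  + by apply/cvg_at_right_filter; apply: FC.
  + by apply/cvg_at_left_filter; apply: FC.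
- move=> t; rewrite in_itv/= => /andP[et _].
  have t0 : 0 < t by exact: lt_trans et.
  rewrite /F derive1Ml; last exact: derivable_pow.
  rewrite powR_derive1 ?in_itv/= ?andbT// mulrA mulVf ?gt_eqF// mul1r.
  by [].
Qed.

Lemma int_pow (s : R) : 0 < s ->
  ((s^-1)%:E <= \int[mu]_(t in `]0%R, 1%R[) (t `^ (s - 1))%:E)%E.
Proof.
move=> s0.
have mP : forall D, measurable_fun D (fun t : R => (t `^ (s - 1))%:E).
  by move=> D; apply/measurable_EFinP; apply: measurable_funTS; exact: measurable_powR.
apply/lee_subgt0Pr => d d0.
pose e := Num.min 2^-1 ((d * s) `^ s^-1).
have ds0 : 0 < d * s by rewrite mulr_gt0.
have e0 : 0 < e by rewrite lt_min invr_gt0 ltr0n powR_gt0.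
have e1 : e < 1.
  by rewrite /e gt_min; apply/orP; left; rewrite invf_lt1// ltr1n.
have es : e `^ s <= d * s.
  apply: (@le_trans _ _ (((d * s) `^ s^-1) `^ s)).
    apply: ge0_ler_powR; [exact: ltW|by rewrite nnegrE ltW|by rewrite nnegrE powR_ge0|].
    by rewrite /e ge_min lexx orbT.
  by rewrite -powRrM mulVf ?gt_eqF// powRr1 // ltW.
apply: (@le_trans _ _ (\int[mu]_(t in `[e, 1%R]%classic) (t `^ (s - 1))%:E)%E).
  rewrite FTC_pow ?e0 ?e1// -EFinB lee_fin.
  rewrite mulrBl mul1r lerB// ler_pdivrMr// mulrC.
rewrite -(@integral_itv_obnd_cbnd _ e (BRight 1%R)) // -(@integral_itv_bndo_bndc _ (BRight e) 1%R) //.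
apply: (@ge0_subset_integral _ _ _ mu _ _ (measurable_itv _) (measurable_itv _) _ (mP _)).
- by move=> t _; rewrite lee_fin powR_ge0.
- move=> t /=; rewrite !in_itv/= => /andP[et t1].
  by rewrite t1 andbT (lt_trans e0 et).
Qed.

Lemma int_exp (r : R) : 0 < r ->
  (\int[mu]_(t in `]0%R, +oo[) (r * expR (- r * t))%:E = 1)%E.
Proof.
move=> r0.
have cexpNM : continuous (fun z : R^o => expR (- r * z)).
  move=> z; apply: continuous_comp; last exact: continuous_expR.
  by apply: continuousM => //; apply: (@continuousN _ R^o); exact: cst_continuous.
transitivity (\int[mu]_(t in `]0%R, +oo[) (exponential_pdf r t)%:E)%E.
  apply: eq_integral => t; rewrite inE/= in_itv/= andbT => t0.
  by rewrite exponential_pdfE// ltW.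
rewrite integral_itv_obnd_cbnd; last first.
  by apply/measurable_EFinP; apply: measurable_funTS; exact: measurable_exponential_pdf.
rewrite (@ge0_continuous_FTC2y _ _
  (fun x => - (expR (- r * x))) _ 0)//.
- by rewrite mulr0 expR0 EFinN oppeK add0e.
- by move=> x _; apply: exponential_pdf_ge0; exact: ltW.
- exact: within_continuous_exponential_pdf.
- rewrite -oppr0; apply: cvgN.
  rewrite (_ : (fun x => expR (- r * x)) =
               (fun z => expR (- z)) \o (fun z => r * z)); last first.
    by apply: eq_fun => x; rewrite mulNr.
  apply: (@cvg_comp _ _ _ _ _ _ (pinfty_nbhs R)); last exact: cvgr_expR.
  exact: gt0_cvgMry.
- by apply: cvgN; apply/cvg_at_right_filter; exact: cexpNM.
- exact: derive1_exponential_pdf.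
Qed.

Lemma pt2 (x a t : R) : 0 < x <= 1 -> 0 < a < 1 -> 0 < t ->
  (a / expR 1) `^ (x - 1) * ((1 - x) / (1 - a)) `^ (x - 1)
    * expR (- a^-1 * t)
  <= t `^ (x - 1) * expR (- t).
Proof.
move=> hx ha t0.
have [x0 x1'] := andP hx; have [a0 a1] := andP ha.
rewrite Kexp//.
move: x1'; rewrite le_eqVlt => /predU1P[x1|x1].
  rewrite x1 subrr mul0r expR0 powRr0 !mul1r ler_expR mulNr lerN2.
  have : 1 <= a^-1 by rewrite invf_ge1 // ltW.
  nra.
rewrite !powR_pos// -!expRD ler_expR.
have := @core x a t (introT andP (conj x0 x1)) ha t0.
have e : (1 - a) / a * t = a^-1 * t - t by field; rewrite gt_eqF.
rewrite e mulNr; lra.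
Qed.

Lemma meas1 (x y : R) (D : set R) :
  measurable_fun D (fun t : R => ((- ln t) `^ (x - 1) * (- ln (1 - t)) `^ (y - 1))%:E).
Proof.
apply/measurable_EFinP; apply: measurable_funTS; apply: measurable_funM.
- apply: (measurableT_comp (measurable_powR _)).
  apply: measurableT_comp => //; exact: measurable_ln.
- apply: (measurableT_comp (measurable_powR _)).
  apply: measurableT_comp => //; apply: measurableT_comp; first exact: measurable_ln.
  exact: measurable_funB.
Qed.

Lemma meas2 (x : R) (D : set R) :
  measurable_fun D (fun t : R => (t `^ (x - 1) * expR (- t))%:E).
Proof.
apply/measurable_EFinP; apply: measurable_funTS; apply: measurable_funM.
- exact: measurable_powR.
- apply: measurableT_comp => //; exact: measurable_expR.
Qed.

Lemma meas3 (c d : R) (D : set R) :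
  measurable_fun D (fun t : R => (c * expR (d * t))%:E).
Proof.
apply/measurable_EFinP; apply: measurable_funTS; apply: measurable_funM => //.
apply: measurableT_comp => //; exact: measurable_expR.
Qed.
End S.

Theorem mainTheorem5 (R : realType) :
  (forall x y a : R, 0 < x <= 1 -> 1 <= y -> 0 < a < 1 ->
     (((a / (1 + a * (y - 1))) * (a / expR 1) `^ (x - 1)
        * ((1 - x) / (1 - a)) `^ (x - 1))%:E <= Bigamma x y)%E)
  /\
  (forall x a : R, 0 < x <= 1 -> 0 < a < 1 ->
     ((a `^ x * expR (1 - x) * ((1 - x) / (1 - a)) `^ (x - 1))%:E
       <= EulerGamma x)%E).
Proof.
split.
- move=> x y a hx y1 ha.
  have [a0 a1] := andP ha.
  set K := (a / expR 1) `^ (x - 1) * ((1 - x) / (1 - a)) `^ (x - 1).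
  have K0 : 0 <= K by rewrite mulr_ge0 ?powR_ge0.
  pose s := (1 + a * (y - 1)) / a.
  have s0 : 0 < s.
    by rewrite divr_gt0// ltr_pwDl// mulr_ge0 ?subr_ge0// ltW.
  have es : s - 1 = (1 - a) / a + (y - 1).
    by rewrite /s; field; rewrite gt_eqF.
  have is1 : s^-1 = a / (1 + a * (y - 1)) by rewrite invf_div.
  rewrite -mulrA -/K -is1 /Bigamma.
  apply: (@le_trans _ _ (\int[@lebesgue_measure R]_(t in `]0%R, 1%R[) (K * t `^ (s - 1))%:E)%E).
    under eq_integral do rewrite EFinM.
    rewrite ge0_integralZl_EFin//; last 2 first.
    + by move=> t _; rewrite lee_fin powR_ge0.
    + by apply/measurable_EFinP; apply: measurable_funTS; exact: measurable_powR.
    rewrite mulrC EFinM; apply: lee_wpmul2l; first by rewrite lee_fin.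
    exact: int_pow.
  apply: ge0_le_integral => //.
  + by move=> t _; rewrite lee_fin mulr_ge0 ?powR_ge0.
  + by apply/measurable_EFinP; apply: measurable_funTS; apply: measurable_funM => //; exact: measurable_powR.
  + exact: meas1.
  + move=> t; rewrite /= in_itv/= => t01.
    by rewrite lee_fin es; apply: pt1.
- move=> x a hx ha.
  have [x0 x1] := andP hx; have [a0 a1] := andP ha.
  set K := (a / expR 1) `^ (x - 1) * ((1 - x) / (1 - a)) `^ (x - 1).
  have K0 : 0 <= K by rewrite mulr_ge0 ?powR_ge0.
  have -> : a `^ x * expR (1 - x) * ((1 - x) / (1 - a)) `^ (x - 1) = K * a.
    rewrite /K Kexp//.
    move: x1; rewrite le_eqVlt => /predU1P[->|x1].
      by rewrite subrr powRr1 ?ltW// expR0 powRr0 mul0r expR0 !mulr1 mul1r.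
    rewrite !powR_pos ?divr_gt0 ?subr_gt0//.
    rewrite [X in _ = _ * X](_ : a = expR (ln a)); last by rewrite lnK // posrE.
    rewrite -!expRD.
    congr expR; rewrite ln_div ?posrE ?subr_gt0 //; ring.
  rewrite /EulerGamma.
  have aa : a^-1 > 0 by rewrite invr_gt0.
  apply: (@le_trans _ _ (\int[@lebesgue_measure R]_(t in `]0%R, +oo[) ((K * a) * (a^-1 * expR (- a^-1 * t)))%:E)%E).
    under eq_integral do rewrite EFinM.
    rewrite ge0_integralZl_EFin//; last 3 first.
    + by move=> t _; rewrite lee_fin mulr_ge0// ?expR_ge0// ltW.
    + exact: meas3.
    + by rewrite mulr_ge0// ltW.
    by rewrite int_exp// mule1.
  apply: ge0_le_integral => //.
  + move=> t _; rewrite lee_fin; apply: mulr_ge0; first by rewrite mulr_ge0 // ltW.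
    by rewrite mulr_ge0 ?expR_ge0 // ltW.
  + apply/measurable_EFinP; apply: measurable_funTS; apply: measurable_funM => //; apply: measurable_funM => //.
    apply: measurableT_comp => //; exact: measurable_expR.
  + exact: meas2.
  + move=> t; rewrite /= in_itv/= andbT => t0.
    rewrite lee_fin mulrA -(mulrA K) mulfV ?gt_eqF// mulr1.
    exact: pt2.
Qed.
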